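(* Let $\delta t>0$ and $\sigma>0$, and let $(\tilde c_h^{n},c_h^n,\tilde\rho_h^n,\rho_h^n,\lambda_h^n,\xi_h^n,\theta_h^{n-\frac12})_{n\ge 1}$ be any solution of the Crank–Nicolson positivity-preserving scheme (Steps 1–4 in the context), started with $\lambda_h^0\equiv 0$, $\xi_h^0=0$. Then for every $n\ge 0$, $$\lambda_h^{n+1}(z)\ge 0\ \ \forall z\in\Sigma_h,\qquad \xi_h^{n+1}=-\frac{[\lambda_h^{n+1},1]}{|\Omega|}\le 0 .$$
   Context: Discrete setting: $\Sigma_h$ is a finite set of nodes in $\bar\Omega\subset\mathbb R^d$; $X_h$ is identified with the space of real grid functions on $\Sigma_h$ (nodal values), and products, $\log$, etc. act pointwise on nodal values. The discrete inner product is $[u,v]=\sum_{z\in\Sigma_h}\beta_z u(z)v(z)$ with fixed weights $\beta_z>0$ (for vector grid functions $[w,w']=\sum_z\beta_z w(z)\cdot w'(z)$), $\|u\|=[u,u]^{1/2}$, $|\Omega|:=[1,1]$. $\nabla_h$ (discrete gradient) and $\nabla_h\cdot$ (discrete divergence) satisfy summation by parts $[\nabla_h\cdot w,v]=-[w,\nabla_h v]$ and $\nabla_h 1=0$ (periodic boundary conditions); $\Delta_h=\nabla_h\cdot\nabla_h$. Parameters $\epsilon,\mu,\gamma,\chi>0$. Crank–Nicolson positivity scheme for the first Keller–Segel system ($\partial_t\rho=\gamma\Delta\rho-\chi\nabla\cdot(\rho\nabla c)$, $\epsilon\partial_t c=\mu\Delta c+\rho$): write $\tilde c_h^{n+\frac12}=\frac{\tilde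 c_h^{n+1}+c_h^n}{2}$, $\tilde\rho_h^{n+\frac12}=\frac{\tilde\rho_h^{n+1}+\rho_h^n}{2}$, $\rho_h^{n+\frac12}=\frac{\rho_h^{n+1}+\rho_h^n}{2}$. Given $\rho_h^{n-1},\rho_h^n,c_h^n,\tilde c_h^n,\lambda_h^n\in X_h$, $\xi_h^n\in\mathbb R$: Step 1: $\epsilon\frac{\tilde c_h^{n+1}-c_h^n}{\delta t}=\mu\Delta_h\tilde c_h^{n+\frac12}+\frac32\rho_h^n-\frac12\rho_h^{n-1}$. Step 2: $\frac{\tilde\rho_h^{n+1}-\rho_h^n}{\delta t}=\gamma\Delta_h\tilde\rho_h^{n+\frac12}-\chi\nabla_h\cdot(\tilde\rho_h^{n+\frac12}\nabla_h\tilde c_h^{n+\frac12})+\lambda_h^n+\xi_h^n$. Step 3: find $\rho_h^{n+1},\lambda_h^{n+1}\in X_h$, $\xi_h^{n+1}\in\mathbb R$ with $\frac{\rho_h^{n+1}-\tilde\rho_h^{n+1}}{\delta t}=\frac{\lambda_h^{n+1}+\xi_h^{n+1}-\lambda_h^n-\xi_h^n}{2}$ at every node, $\rho_h^{n+1}(z)\ge0$, $\lambda_h^{n+1}(z)\ge0$, $\lambda_h^{n+1}(z)\rho_h^{n+1}(z)=0$ for all $z\in\Sigma_h$, and $[\rho_h^{n+1},1]=[\rho_h^0,1]$. Step 4: find $c_h^{n+1}\in X_h$ and a scalar $\theta_h^{n+\frac12}$ with $\epsilon\frac{c_h^{n+1}-\tilde c_h^{n+1}}{\delta t}=\theta_h^{n+\frac12}$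 and $\frac{E_h^{n+1}-E_h^n}{\delta t}=-\big[\rho_h^{n+\frac12}|\nabla_h(\log(\rho_h^{n+\frac12}+\sigma)-\tilde c_h^{n+\frac12})|^2+|\tfrac{\tilde c_h^{n+1}-\tilde c_h^n}{\delta t}|^2,1\big]$, where $E_h^{k}=[\rho_h^{k}\log(\rho_h^{k}+\sigma)-\rho_h^{k}-\rho_h^{k}c_h^{k}+\frac12|\nabla_h c_h^{k}|^2,1]$. *)

(* Defs.v *)
From mathcomp Require Import all_boot all_order all_algebra.
From mathcomp Require Import reals exp.
Set Implicit Arguments. Unset Strict Implicit. Unset Printing Implicit Defensive.
Import Order.TTheory GRing.Theory Num.Theory.
Local Open Scope ring_scope.

Section Grid.
Variables (R : realType) (T : finType) (d : nat).

Definition dip (beta : T -> R) (u v : T -> R) : R :=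
  \sum_(z : T) beta z * u z * v z.

Definition dipv (beta : T -> R) (w w' : T -> 'I_d -> R) : R :=
  \sum_(z : T) beta z * \sum_(i < d) w z i * w' z i.

Definition one_g : T -> R := fun _ => 1.

Definition sqnorm (w : T -> 'I_d -> R) : T -> R :=
  fun z => \sum_(i < d) w z i ^+ 2.

Definition lap (grad : (T -> R) -> T -> 'I_d -> R)
  (div : (T -> 'I_d -> R) -> T -> R) (u : T -> R) : T -> R := div (grad u).

Definition mid (u v : T -> R) : T -> R := fun z => (u z + v z) / 2.

Definition energy (beta : T -> R) (grad : (T -> R) -> T -> 'I_d -> R)
  (sigma : R) (rho c : T -> R) : R :=
  dip beta (fun z => rho z * ln (rho z + sigma) - rho z - rho z * c z
                     + sqnorm (grad c) z / 2) one_g.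

End Grid.
Arguments one_g : clear implicits.

(* Main.v *)
Require Import Defs.
From mathcomp Require Import all_boot all_order all_algebra.
From mathcomp Require Import reals exp.
Import Order.TTheory GRing.Theory Num.Theory.
Local Open Scope ring_scope.


From mathcomp Require Import ring lra.

Section H.
Variables (R : realType) (T : finType) (beta : T -> R).
Let S (u : T -> R) := dip beta u (one_g R T).

Lemma S_ext f g : (forall z, f z = g z) -> S f = S g.
Proof. move=> H; rewrite /S /dip; apply: eq_bigr => z _; by rewrite H. Qed.

Lemma S_add f g : S (fun z => f z + g z) = S f + S g.
Proof. rewrite /S /dip -big_split /=; apply: eq_bigr => z _; rewrite /one_g; ring. Qed.

Lemma S_sub f g : S (fun z => f z - g z) = S f - S g.
Proof. rewrite /S /dip -sumrB /=; apply: eq_bigr => z _; rewrite /one_g; ring. Qed.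

Lemma S_scale k f : S (fun z => k * f z) = k * S f.
Proof. rewrite /S /dip mulr_sumr; apply: eq_bigr => z _; rewrite /one_g; ring. Qed.

Lemma S_const k : S (fun _ => k) = k * S (one_g R T).
Proof. rewrite /S /dip mulr_sumr; apply: eq_bigr => z _; rewrite /one_g; ring. Qed.

Lemma S_ge0 f : (forall z, 0 < beta z) -> (forall z, 0 <= f z) -> 0 <= S f.
Proof.
move=> Hb Hf; rewrite /S /dip; apply: sumr_ge0 => z _; rewrite /one_g mulr1.
by apply: mulr_ge0; [apply: ltW|].
Qed.

Lemma S_one_gt0 : (0 < #|T|)%N -> (forall z, 0 < beta z) -> 0 < S (one_g R T).
Proof.
move=> HT Hb; case/card_gt0P: HT => z0 _.
rewrite /S /dip (bigD1 z0) //= /one_g !mulr1.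
apply: ltr_wpDr; last exact: Hb.
by apply: sumr_ge0 => z _; rewrite !mulr1; apply: ltW.
Qed.
End H.

Theorem mainTheorem1
  (R : realType) (T : finType) (d : nat)
  (beta : T -> R)
  (grad : (T -> R) -> T -> 'I_d -> R)
  (div : (T -> 'I_d -> R) -> T -> R)
  (eps mu gamma chi sigma dt : R)
  (rho rhot c ct lam : nat -> T -> R) (xi theta : nat -> R)
  (rhom1 : T -> R)
  (* standing assumptions on the discrete setting *)
  (HT : (0 < #|T|)%N)
  (Hbeta : forall z, 0 < beta z)
  (Hsbp : forall (w : T -> 'I_d -> R) (v : T -> R),
            dip beta (div w) v = - dipv beta w (grad v))
  (Hgrad1 : grad (one_g R T) = (fun _ _ => 0))
  (Heps : 0 < eps) (Hmu : 0 < mu) (Hgamma : 0 < gamma) (Hchi : 0 < chi)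
  (Hsigma : 0 < sigma) (Hdt : 0 < dt)
  (* initialization lambda^0 = 0, xi^0 = 0 *)
  (Hlam0 : forall z, lam 0%N z = 0) (Hxi0 : xi 0%N = 0)
  (* Step 1 (rho^{-1} := rhom1 at n = 0) *)
  (Hstep1 : forall n z,
     eps * ((ct n.+1 z - c n z) / dt)
     = mu * lap grad div (mid (ct n.+1) (c n)) z
       + 3 / 2 * rho n z
       - 1 / 2 * (if n is m.+1 then rho m z else rhom1 z))
  (* Step 2 *)
  (Hstep2 : forall n z,
     (rhot n.+1 z - rho n z) / dt
     = gamma * lap grad div (mid (rhot n.+1) (rho n)) z
       - chi * div (fun y i => mid (rhot n.+1) (rho n) y
                               * grad (mid (ct n.+1) (c n)) y i) z
       + lam n z + xi n)
  (* Step 3 *)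
  (Hstep3 : forall n,
     (forall z, (rho n.+1 z - rhot n.+1 z) / dt
                = (lam n.+1 z + xi n.+1 - lam n z - xi n) / 2)
     /\ (forall z, 0 <= rho n.+1 z)
     /\ (forall z, 0 <= lam n.+1 z)
     /\ (forall z, lam n.+1 z * rho n.+1 z = 0)
     /\ dip beta (rho n.+1) (one_g R T) = dip beta (rho 0%N) (one_g R T))
  (* Step 4 (theta n stands for theta_h^{n+1/2}) *)
  (Hstep4 : forall n,
     (forall z, eps * ((c n.+1 z - ct n.+1 z) / dt) = theta n)
     /\ (energy beta grad sigma (rho n.+1) (c n.+1)
         - energy beta grad sigma (rho n) (c n)) / dt
        = - dip beta
              (fun z =>
                 mid (rho n.+1) (rho n) z
                 * sqnorm (grad (fun y => ln (mid (rho n.+1) (rho n) y + sigma)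
                                          - mid (ct n.+1) (c n) y)) z
                 + ((ct n.+1 z - ct n z) / dt) ^+ 2)
              (one_g R T)) :
  forall n : nat,
    (forall z, 0 <= lam n.+1 z)
    /\ xi n.+1 = - dip beta (lam n.+1) (one_g R T) / dip beta (one_g R T) (one_g R T)
    /\ xi n.+1 <= 0.
Proof.
set S := fun u => dip beta u (one_g R T).
have Hdiv : forall w, S (div w) = 0.
  move=> w; rewrite /S Hsbp Hgrad1 /dipv.
  rewrite big1 ?oppr0 // => z _; rewrite big1 ?mulr0 // => i _; by rewrite mulr0.
set A := fun k => S (lam k) + xi k * S (one_g R T).
have mass : forall n, S (rho n.+1) = S (rho n).
  move=> n; rewrite /S (proj2 (proj2 (proj2 (proj2 (Hstep3 n))))).
  by case: n => [|m] //; rewrite (proj2 (proj2 (proj2 (proj2 (Hstep3 m))))).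
have step : forall n, A n.+1 = - A n.
  move=> n.
  have e2 : S (rhot n.+1) - S (rho n) = dt * A n.
    rewrite -S_sub (S_ext _ _ _ _ (fun z => dt * (gamma * lap grad div (mid (rhot n.+1) (rho n)) z
       - chi * div (fun y i => mid (rhot n.+1) (rho n) y
                               * grad (mid (ct n.+1) (c n)) y i) z
       + lam n z + xi n))); last first.
      move=> z; rewrite -Hstep2; field; exact: lt0r_neq0.
    rewrite S_scale S_add S_add S_sub S_scale S_scale S_const /lap.
    have := Hdiv (grad (mid (rhot n.+1) (rho n))); rewrite /S => ->.
    have := Hdiv (fun y i => mid (rhot n.+1) (rho n) y * grad (mid (ct n.+1) (c n)) y i); rewrite /S => ->.
    rewrite /A /S; ring.
  have e3 : S (rho n.+1) - S (rhot n.+1) = dt / 2 * (A n.+1 - A n).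
    rewrite -S_sub (S_ext _ _ _ _ (fun z => dt / 2 * (lam n.+1 z + xi n.+1 - lam n z - xi n))); last first.
      move=> z; have := (proj1 (Hstep3 n)) z => H.
      have Hd : dt != 0 by exact: lt0r_neq0.
      have -> : dt / 2 * (lam n.+1 z + xi n.+1 - lam n z - xi n) = dt * ((lam n.+1 z + xi n.+1 - lam n z - xi n) / 2) by ring.
      rewrite -H; field; exact: Hd.
    rewrite S_scale S_sub S_sub S_add S_const S_const /A /S; ring.
  have h : dt / 2 * (A n.+1 + A n) = 0.
    have := mass n; rewrite -/S => hm.
    have -> : dt / 2 * (A n.+1 + A n) = dt / 2 * (A n.+1 - A n) + dt * A n by field.
    rewrite -e3 -e2 hm; ring.
  move/eqP: h; rewrite mulf_eq0 => /orP [|/eqP h].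
    rewrite mulf_eq0 invr_eq0 (negbTE (lt0r_neq0 Hdt)) /=.
    by rewrite pnatr_eq0.
  by apply/eqP; rewrite -subr_eq0 opprK h.
have A0 : forall n, A n = 0.
  elim=> [|n IH]; first by rewrite /A /S (S_ext _ _ _ _ (fun _ => 0)) // S_const Hxi0; ring.
  by rewrite step IH oppr0.
have Hone := @S_one_gt0 R T beta HT Hbeta; rewrite -/S in Hone.
move=> n; split; first exact: (proj1 (proj2 (proj2 (Hstep3 n)))).
have Hx : xi n.+1 = - S (lam n.+1) / S (one_g R T).
  have := A0 n.+1; rewrite /A => h.
  have Hn : S (one_g R T) != 0 by exact: lt0r_neq0.
  have -> : S (lam n.+1) = - (xi n.+1 * S (one_g R T)).
    by apply/eqP; rewrite -subr_eq0 opprK h.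
  by rewrite opprK mulfK.
split; first exact: Hx.
rewrite Hx mulNr oppr_le0; apply: divr_ge0; last exact: ltW.
apply: S_ge0 => //; exact: (proj1 (proj2 (proj2 (Hstep3 n)))).
Qed.
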